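(* Under the model assumptions in the context, suppose the distribution of $\mathbf W$ is $p_{\mathbf W}(\cdot;\boldsymbol\psi^* )$ where $\boldsymbol\psi^*\in\Theta_{\boldsymbol\psi}$ satisfies $\pi^1<\dots<\pi^J$ and conditions ID$(k)$ for some integer $k\ge1$ with $T_0\ge k+1$, $T\ge 2(k+1)$. Then for each $t\ge T_0+1$ the ATT $\boldsymbol\mu^{\mathrm{ATT}}_t=\mathbb{E}[\mathbf X_t(1)-\mathbf X_t(0)\mid D=1]=\sum_{j=1}^J\Pr(Z=j\mid D=1)\boldsymbol\mu^{\mathrm{ATT},j}_t$ is uniquely determined by the pmf $\{p_{\mathbf W}(\mathbf w;\boldsymbol\psi^* ):\mathbf w\in\mathcal X^T\times\{0,1\}\}$.
   Context: Fix integers $K\ge2$, $J\ge1$, $T_0\ge1$, $T>T_0$, $\mathcal X=\{x\in\{0,1\}^K:\sum_k x^{(k)}=1\}$. A unit has latent type $Z\in\{1,\dots,J\}$, treatment indicator $D\in\{0,1\}$ (treated units untreated in periods $\le T_0$, treated afterwards), potential outcomes $\mathbf X_t(0),\mathbf X_t(1)\in\mathcal X$; observed $\mathbf X_t=\mathbf X_t(0)$ for $t\le T_0$, $\mathbf X_t=D\mathbf X_t(1)+(1-D)\mathbf X_t(0)$ for $t>T_0$, $\mathbf W=(\mathbf X_1,\dots,\mathbf X_T,D)$, $\mathbf X_1^{T_0}=(\mathbf X_1,\dots,\mathbf X_{T_0})$. LTATT: $\boldsymbol\mu^{\mathrm{ATT},j}_t=\mathbb{E}[\mathbf X_t(1)-\mathbf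 X_t(0)\mid D=1,Z=j]$. Model assumptions: no anticipation ($\mathbf X_t(1)=\mathbf X_t(0)$, $t\le T_0$); for $t\ge T_0+1$ and all $\mathbf x_t,\mathbf x_1^{T_0},j$: $\Pr(\mathbf X_t(0)=\mathbf x_t\mid\mathbf X_1^{T_0}=\mathbf x_1^{T_0},D=0,Z=j)=\Pr(\mathbf X_t(0)=\mathbf x_t\mid\mathbf X_1^{T_0}=\mathbf x_1^{T_0},D=1,Z=j)$; there is $\epsilon>0$ with $\epsilon\le\Pr(D=1\mid\mathbf X_1^{T_0}=\mathbf x_1^{T_0},Z=j)\le1-\epsilon$; for each $j,d$, conditional on $Z=j,D=d$, $\{\mathbf X_t(d)\}_{t=1}^T$ is a first-order (possibly non-stationary) Markov chain. $J$ is known. Parametrization: $\boldsymbol\psi=(\boldsymbol\pi,\boldsymbol\varphi^1,\dots,\boldsymbol\varphi^J)$, $\pi^j=\Pr(Z=j)$, $\boldsymbol\varphi^j$ consisting of $p^j_{\mathbf X_1(0),D}(x,d)=\Pr(\mathbf X_1(0)=x,D=d\mid Z=j)$, $p^j_{\mathbf X_t(0)|\mathbf X_{t-1}(0)}(x|x')=\Pr(\mathbf X_t(0)=x\mid\mathbf X_{t-1}(0)=x',Z=j)$ ($t=2,\dots,T$), $p^j_{\mathbf X_t(1)|\mathbf X_{t-1}(1)}(x|x')$ ($t=T_0+1,\dots,T$). $\Theta_{\boldsymbol\psi}$: $\sum_j\pi^j=1$, $\epsilon\le\pi^j\le1-\epsilon$. $p_{\mathbf W}(\mathbf w;\boldsymbol\psi)=\sum_j\pi^jp^j_{\mathbf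 W}(\mathbf w;\boldsymbol\varphi^j)$, where for $\mathbf w=(x_1,\dots,x_T,d)$: $p^j_{\mathbf W}=p^j_{\mathbf X_1(0),D}(x_1,0)\prod_{t=2}^Tp^j_{\mathbf X_t(0)|\mathbf X_{t-1}(0)}(x_t|x_{t-1})$ if $d=0$, and $p^j_{\mathbf X_1(0),D}(x_1,1)\prod_{t=2}^{T_0}p^j_{\mathbf X_t(0)|\mathbf X_{t-1}(0)}(x_t|x_{t-1})\prod_{t=T_0+1}^Tp^j_{\mathbf X_t(1)|\mathbf X_{t-1}(1)}(x_t|x_{t-1})$ if $d=1$. Conditions ID$(k)$: for $\xi_1=(x_1,\dots,x_k)\in\mathcal X^k$, $P^j_1(\xi_1,d)=p^j_{\mathbf X_1(0),D}(x_1,d)\prod_{t=2}^kp^j_{\mathbf X_t(0)|\mathbf X_{t-1}(0)}(x_t|x_{t-1})$, $\tau^j(\xi_1,d)=\pi^jP^j_1(\xi_1,d)/\sum_m\pi^mP^m_1(\xi_1,d)$; $q^j_{21}(\xi_2|\xi_1)=p^j_{\mathbf X_{k+1}(0)|\mathbf X_k(0)}(\xi_2|x_k)$; $q^j_{32}(\xi_3|\xi_2)=p^j_{\mathbf X_{k+2}(0)|\mathbf X_{k+1}(0)}(\xi_3|\xi_2)$; $q^j_{43}(\xi_4|\xi_3)=\prod_{t=k+3}^Tp^j_{\mathbf X_t(0)|\mathbf X_{t-1}(0)}(x_t|x_{t-1})$ for $\xi_4=(x_{k+3},\dots,x_T)$, $x_{k+2}=\xi_3$; $\lambda^j_1(\xi_2|\xi_1)=\tau^j(\xi_1,0)q^j_{21}(\xi_2|\xi_1)$.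 Given $a_1,\dots,a_J\in\mathcal X^k$, $b_1,\dots,b_{J-1}\in\mathcal X^{T-k-2}$: $\bar L_{\xi_2}=[\lambda^j_1(\xi_2|a_i)]_{i,j}$; $L_{\xi_3}$ has first row all ones and $(i+1,j)$ entry $q^j_{43}(b_i|\xi_3)$; $D_{\xi_3|\xi_2}=\mathrm{diag}_j(q^j_{32}(\xi_3|\xi_2))$. (a) There is $\xi_3^*\in\mathcal X$ such that for every $\xi_3\in\mathcal X$ there exist $\check\xi_2,\bar\xi_2,\bar\xi_3\in\mathcal X$, $a_i$, $b_i$ with (i) $\bar L_{\check\xi_2},\bar L_{\bar\xi_2},L_{\xi_3},L_{\xi_3^*},L_{\bar\xi_3}$ nonsingular, (ii) the diagonal entries of $D_{\xi_3|\check\xi_2}D_{\bar\xi_3|\check\xi_2}^{-1}D_{\bar\xi_3|\bar\xi_2}D_{\xi_3|\bar\xi_2}^{-1}$ pairwise distinct; (b) all $q^j_{32},q^j_{43}$ values positive; (c) for every $\xi_1$ there are $c_1,\dots,c_J\in\mathcal X$ with $[q^j_{21}(c_i|\xi_1)]_{i,j}$ nonsingular; (d) for every $\xi_2$ there are $e_1,\dots,e_J\in\mathcal X^k$ with $[\tau^j(e_i,1)q^j_{21}(\xi_2|e_i)]_{i,j}$ nonsingular. *)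

(* Defs.v *)
From HB Require Import structures.
From mathcomp Require Import all_boot all_order all_algebra.
From mathcomp Require Import reals.
Set Implicit Arguments. Unset Strict Implicit. Unset Printing Implicit Defensive.
Import Order.TTheory GRing.Theory Num.Theory.
Local Open Scope ring_scope.

(* The one-hot state space X = {x in {0,1}^K : sum x = 1} is identified with
   'I_K (state k <-> k-th unit vector); expectations of X_t are row vectors
   in 'rV[R]_K whose k-th entry is Pr(X_t = e_k | ...). *)

(* Parameter psi = (pi, phi^1, ..., phi^J).
   pi_ j          = pi^j = Pr(Z = j)
   pXD j x d      = p^j_{X_1(0),D}(x, d)
   p0 j t x x'    = p^j_{X_t(0)|X_{t-1}(0)}(x | x')   (relevant for 2 <= t <= T)
   p1 j t x x'    = p^j_{X_t(1)|X_{t-1}(1)}(x | x')   (relevant for T0+1 <= t <= T) *)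
Record param (R : realType) (K J : nat) := Param {
  pi_ : 'I_J -> R;
  pXD : 'I_J -> 'I_K -> bool -> R;
  p0  : 'I_J -> nat -> 'I_K -> 'I_K -> R;
  p1  : 'I_J -> nat -> 'I_K -> 'I_K -> R }.

Section Model.
Variables (R : realType) (K J : nat).
Local Notation st := 'I_K.
Local Notation par := (param R K J).

(* Probability of a (finite) Markov path x, where index s : 'I_n of x is
   period s + off, [init] gives the probability of the first state and
   [tr t y y'] the transition probability to y at period t from y'. *)
Definition chain_prob {n : nat} (off : nat) (init : st -> R)
    (tr : nat -> st -> st -> R) (x : {ffun 'I_n -> st}) : R :=
  (\prod_(s < n | (s : nat) == 0%N) init (x s)) *
  \prod_(s < n) \prod_(r < n | (r : nat).+1 == s) tr (s + off)%N (x s) (x r).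

Definition tr_treated (T0 : nat) (psi : par) (j : 'I_J) (t : nat) :=
  if (t <= T0)%N then p0 psi j t else p1 psi j t.

(* p_W(w; psi), w = (x_1, ..., x_T, d); x s is x_{s+1}. *)
Definition pW (T0 T : nat) (psi : par) (x : {ffun 'I_T -> st}) (d : bool) : R :=
  \sum_(j < J) pi_ psi j *
    (if d then chain_prob 1 (fun x1 => pXD psi j x1 true) (tr_treated T0 psi j) x
     else chain_prob 1 (fun x1 => pXD psi j x1 false) (p0 psi j) x).

Definition stateAt (T : nat) (x : {ffun 'I_T -> st}) (t : nat) (k0 : st) : R :=
  ([exists s : 'I_T, ((s : nat).+1 == t) && (x s == k0)])%:R.

Definition PD1_Z (psi : par) (j : 'I_J) : R := \sum_(x1 : st) pXD psi j x1 true.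
Definition PZD1 (psi : par) (j : 'I_J) : R := pi_ psi j * PD1_Z psi j.

Definition EX1 (T0 T : nat) (psi : par) (j : 'I_J) (t : nat) : 'rV[R]_K :=
  \row_k0 ((\sum_(x : {ffun 'I_T -> st}) stateAt x t k0 *
      chain_prob 1 (fun x1 => pXD psi j x1 true) (tr_treated T0 psi j) x)
     / PD1_Z psi j).

(* E[X_t(0) | D = 1, Z = j]: by the model assumptions X(0) given D=1, Z=j is
   Markov with the untreated transitions p0. *)
Definition EX0 (T : nat) (psi : par) (j : 'I_J) (t : nat) : 'rV[R]_K :=
  \row_k0 ((\sum_(x : {ffun 'I_T -> st}) stateAt x t k0 *
      chain_prob 1 (fun x1 => pXD psi j x1 true) (p0 psi j) x)
     / PD1_Z psi j).

Definition muATTj (T0 T : nat) (psi : par) (j : 'I_J) (t : nat) : 'rV[R]_K :=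
  EX1 T0 T psi j t - EX0 T psi j t.

Definition ATT (T0 T : nat) (psi : par) (t : nat) : 'rV[R]_K :=
  \sum_(j < J) (PZD1 psi j / \sum_(m < J) PZD1 psi m) *: muATTj T0 T psi j t.

(* psi in Theta_psi, with all components genuine (conditional) pmfs, and the
   overlap assumption eps <= Pr(D=1 | X_1^{T0}, Z=j) <= 1 - eps (which in this
   parametrization depends only on x_1; stated in multiplied-out form). *)
Definition valid_param (T0 T : nat) (eps : R) (psi : par) : Prop :=
  [/\ (\sum_(j < J) pi_ psi j = 1 /\
       forall j, eps <= pi_ psi j <= 1 - eps),
      (forall j x d, 0 <= pXD psi j x d) /\
      (forall j, \sum_(x : st) \sum_(d : bool) pXD psi j x d = 1),
      (forall j t x x', (2 <= t <= T)%N -> 0 <= p0 psi j t x x') /\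
      (forall j t x', (2 <= t <= T)%N -> \sum_(x : st) p0 psi j t x x' = 1),
      (forall j t x x', (T0 < t <= T)%N -> 0 <= p1 psi j t x x') /\
      (forall j t x', (T0 < t <= T)%N -> \sum_(x : st) p1 psi j t x x' = 1)
    & (forall j x,
        eps * (pXD psi j x false + pXD psi j x true) <= pXD psi j x true /\
        pXD psi j x true <= (1 - eps) * (pXD psi j x false + pXD psi j x true))].

Section ID.
Variables (T k : nat) (psi : par).
Local Notation xi1 := {ffun 'I_k -> st}.
Local Notation xi4 := {ffun 'I_(T - k.+2) -> st}.

Definition P1 (j : 'I_J) (x1 : xi1) (d : bool) : R :=
  chain_prob 1 (fun y => pXD psi j y d) (p0 psi j) x1.
Definition tau (j : 'I_J) (x1 : xi1) (d : bool) : R :=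
  pi_ psi j * P1 j x1 d / \sum_(m < J) pi_ psi m * P1 m x1 d.
(* q21(xi2 | xi1) = p0_{k+1}(xi2 | x_k), x_k the last entry of xi1 *)
Definition q21 (j : 'I_J) (x2 : st) (x1 : xi1) : R :=
  \sum_(s < k | (s : nat).+1 == k) p0 psi j k.+1 x2 (x1 s).
Definition q32 (j : 'I_J) (x3 x2 : st) : R := p0 psi j k.+2 x3 x2.
(* xi4 = (x_{k+3}, ..., x_T): index s is period s + k + 3 *)
Definition q43 (j : 'I_J) (x4 : xi4) (x3 : st) : R :=
  chain_prob k.+3 (fun y => p0 psi j k.+3 y x3) (p0 psi j) x4.
Definition lam1 (j : 'I_J) (x2 : st) (x1 : xi1) : R := tau j x1 false * q21 j x2 x1.

Definition Lbar (x2 : st) (a : 'I_J -> xi1) : 'M[R]_J :=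
  \matrix_(i, j) lam1 j x2 (a i).
(* row 0 is all ones; row i >= 1 uses b_i := b i (b applied to row 0 unused) *)
Definition Lmat (x3 : st) (b : 'I_J -> xi4) : 'M[R]_J :=
  \matrix_(i, j) (if (i : nat) == 0%N then 1 else q43 j (b i) x3).
Definition Dmat (x3 x2 : st) : 'M[R]_J := diag_mx (\row_j q32 j x3 x2).

Definition ID_cond : Prop :=
  [/\ (exists xs3 : st, forall x3 : st,
         exists (cx2 bx2 bx3 : st) (a : 'I_J -> xi1) (b : 'I_J -> xi4),
           [/\ Lbar cx2 a \in unitmx, Lbar bx2 a \in unitmx,
               Lmat x3 b \in unitmx, Lmat xs3 b \in unitmx & Lmat bx3 b \in unitmx] /\
           injective (fun j : 'I_J =>
             (Dmat x3 cx2 *m invmx (Dmat bx3 cx2) *m Dmat bx3 bx2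
                *m invmx (Dmat x3 bx2)) j j)),
      (forall j x3 x2, 0 < q32 j x3 x2) /\ (forall j x4 x3, 0 < q43 j x4 x3),
      (forall x1 : xi1, exists c : 'I_J -> st,
          \matrix_(i, j) q21 j (c i) x1 \in unitmx)
    & (forall x2 : st, exists e : 'I_J -> xi1,
          \matrix_(i, j) (tau j (e i) true * q21 j x2 (e i)) \in unitmx)].
End ID.
End Model.

(* Main.v *)
Require Import Defs.
From HB Require Import structures.
From mathcomp Require Import all_boot all_order all_algebra.
From mathcomp Require Import reals.
From mathcomp Require Import ring lra zify.
Set Implicit Arguments. Unset Strict Implicit. Unset Printing Implicit Defensive.
Import Order.TTheory GRing.Theory Num.Theory.
Local Open Scope ring_scope.


Section PartB.
Variables (R : fieldType) (J : nat).
Implicit Types (A L M : 'M[R]_J) (d : 'I_J -> R).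

Definition Pm L d M : 'M[R]_J := L *m diag_mx (\row_j d j) *m M.

Lemma diag_unit d : (diag_mx (\row_j d j) \in unitmx) = [forall j, d j != 0].
Proof.
rewrite unitmxE det_diag unitfE; apply/prodf_neq0/forallP => H j.
  by have := H j isT; rewrite mxE.
by move=> _; rewrite mxE; exact: H.
Qed.

Lemma Pm_unit L d M :
  (Pm L d M \in unitmx) = [&& L \in unitmx, [forall j, d j != 0] & M \in unitmx].
Proof. by rewrite /Pm !unitmx_mul diag_unit andbA. Qed.

Lemma Pm_entry L d M L' d' M' :
  Pm L d M = Pm L' d' M' -> Pm L d M \in unitmx ->
  forall j i, d' j * (M' *m invmx M) j i = (invmx L' *m L) j i * d i.
Proof.
move=> E U.
have U' : Pm L' d' M' \in unitmx by rewrite -E.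
move: (U) (U'); rewrite !Pm_unit => /and3P[uL ud uM] /and3P[uL' ud' uM'].
have H : diag_mx (\row_j d' j) *m (M' *m invmx M)
       = (invmx L' *m L) *m diag_mx (\row_j d j).
  have : invmx L' *m Pm L' d' M' *m invmx M = invmx L' *m Pm L d M *m invmx M by rewrite E.
  rewrite /Pm !mulmxA mulVmx // mul1mx -!mulmxA mulmxV // mulmx1.
  by move=> ->.
move=> j i; move/matrixP: H => /(_ j i).
by rewrite mul_diag_mx mul_mx_diag !mxE.
Qed.

Lemma unit_row_nz A (i : 'I_J) : A \in unitmx -> exists j, A i j != 0.
Proof.
move=> uA; case: (pickP (fun j => A i j != 0)) => [j Hj|H]; first by exists j.
have E : ('e_i : 'rV[R]_J) *m A = 0.
  rewrite -rowE; apply/matrixP => a b; rewrite !mxE.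
  by have := H b => /negbFE/eqP.
have : ('e_i : 'rV[R]_J) *m A *m invmx A = 0 by rewrite E mul0mx.
rewrite mulmxK // => /matrixP /(_ 0 i); rewrite !mxE !eqxx /=.
by move/eqP; rewrite oner_eq0.
Qed.

Lemma unit_rows_neq A (i i' : 'I_J) : A \in unitmx -> row i A = row i' A -> i = i'.
Proof.
move=> uA E; apply/eqP; apply/negPn/negP => ne.
have : (('e_i : 'rV[R]_J) - 'e_i') *m A = 0 by rewrite mulmxBl -!rowE E subrr.
have F : (('e_i : 'rV[R]_J) - 'e_i') *m A *m invmx A = 0 -> (('e_i : 'rV[R]_J) - 'e_i') = 0.
  by rewrite mulmxK.
move=> /(congr1 (mulmx^~ (invmx A))); rewrite mul0mx => /F /matrixP /(_ 0 i).
rewrite !mxE !eqxx /= (negbTE ne) subr0 => /eqP; by rewrite oner_eq0.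
Qed.

Lemma partB (Lc Lb Lc' Lb' M Mb M' Mb' : 'M[R]_J)
    (d1 d2 d3 d4 d1' d2' d3' d4' : 'I_J -> R) (i0 : 'I_J) :
  Pm Lc d1 M = Pm Lc' d1' M' -> Pm Lc d2 Mb = Pm Lc' d2' Mb' ->
  Pm Lb d3 Mb = Pm Lb' d3' Mb' -> Pm Lb d4 M = Pm Lb' d4' M' ->
  Pm Lc d1 M \in unitmx -> Pm Lc d2 Mb \in unitmx ->
  Pm Lb d3 Mb \in unitmx -> Pm Lb d4 M \in unitmx ->
  injective (fun i => d1 i / d2 i * d3 i / d4 i) ->
  (forall j, M j i0 = 1) -> (forall j, M' j i0 = 1) ->
  exists s : 'I_J -> 'I_J, injective s /\ forall j l, M' j l = M (s j) l.
Proof.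
move=> E1 E2 E3 E4 U1 U2 U3 U4 linj c0 c0'.
have U1' : Pm Lc' d1' M' \in unitmx by rewrite -E1.
have U2' : Pm Lc' d2' Mb' \in unitmx by rewrite -E2.
have U3' : Pm Lb' d3' Mb' \in unitmx by rewrite -E3.
have U4' : Pm Lb' d4' M' \in unitmx by rewrite -E4.
move: (U1) (U2) (U3) (U4) (U1') (U2') (U3') (U4'); rewrite !Pm_unit.
move=> /and3P[uLc /forallP n1 uM] /and3P[_ /forallP n2 _]
       /and3P[_ /forallP n3 _] /and3P[_ /forallP n4 _].
move=> /and3P[_ /forallP n1' uM'] /and3P[_ /forallP n2' _]
       /and3P[_ /forallP n3' _] /and3P[_ /forallP n4' _].
have e1 := Pm_entry E1 U1; have e2 := Pm_entry E2 U2.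
have e3 := Pm_entry E3 U3; have e4 := Pm_entry E4 U4.
set V := M' *m invmx M in e1 e4.
have uV : V \in unitmx by rewrite unitmx_mul uM' unitmx_inv uM.
have lam j i : V j i != 0 ->
    d1' j / d2' j * d3' j / d4' j = d1 i / d2 i * d3 i / d4 i.
  move=> nV.
  have := e4 j i; have := e3 j i; have := e2 j i; have := e1 j i.
  set v := V j i; set N := (invmx Lc' *m Lc) j i; set vb := (Mb' *m invmx Mb) j i;
    set nb := (invmx Lb' *m Lb) j i.
  move=> h1 h2 h3 h4.
  have hN : N = d1' j * v / d1 i by rewrite h1; field; exact: n1.
  have hvb : vb = N * d2 i / d2' j by rewrite -h2; field; exact: n2'.
  have hnb : nb = d3' j * vb / d3 i by rewrite h3; field; exact: n3.
  rewrite hnb hvb hN in h4.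
  have h5 : d4' j = d3' j * d1' j * d2 i * d4 i / (d1 i * d2' j * d3 i).
    apply: (mulIf nV) => /=; rewrite h4 -/v; field.
    by rewrite n1 n2' n3.
  rewrite h5; field.
  by rewrite ?n1 ?n2 ?n3 ?n4 ?n1' ?n2' ?n3' ?n4'.
pose s j := odflt j [pick i | V j i != 0].
have sP j : V j (s j) != 0.
  rewrite /s; case: pickP => [i -> //|H].
  by case: (unit_row_nz j uV) => i; move: (H i) => /= ->.
have sU j i : V j i != 0 -> i = s j.
  move=> nz; apply: linj => /=; by rewrite -(lam _ _ nz) -(lam _ _ (sP j)).
have MV : M' = V *m M by rewrite /V mulmxKV.
have Mj j l : M' j l = V j (s j) * M (s j) l.
  rewrite MV mxE (bigD1 (s j)) //= big1 ?addr0 // => i ne.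
  case: (eqVneq (V j i) 0) => [->|nz]; first by rewrite mul0r.
  by move: ne; rewrite (sU _ _ nz) eqxx.
have V1 j : V j (s j) = 1 by have := Mj j i0; rewrite c0 c0' mulr1.
have Ms j l : M' j l = M (s j) l by rewrite Mj V1 mul1r.
exists s; split => // j j' ss.
apply: (unit_rows_neq uM'); apply/matrixP => a b; rewrite !mxE !Ms; by rewrite ss.
Qed.
End PartB.


Section Chain.
Variables (R : realType) (K J : nat).
Local Notation st := 'I_K.

Definition fget {m} (f : {ffun 'I_m -> st}) (d : st) (i : nat) : st :=
  if insub i is Some o then f o else d.

Lemma fgetE m (f : {ffun 'I_m -> st}) d (o : 'I_m) : fget f d o = f o.
Proof. by rewrite /fget valK. Qed.

Lemma fgetE' m (f : {ffun 'I_m -> st}) d i (h : (i < m)%N) : fget f d i = f (Ordinal h).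
Proof. by rewrite -(fgetE f d). Qed.

Definition cnat off (init : st -> R) (tr : nat -> st -> st -> R) n (g : nat -> st) : R :=
  (if n is 0 then 1 else init (g 0%N)) * \prod_(1 <= s < n) tr (s + off)%N (g s) (g s.-1).

Lemma chainE n off init tr (x : {ffun 'I_n -> st}) d :
  chain_prob off init tr x = cnat off init tr n (fget x d).
Proof.
rewrite /chain_prob /cnat; case: n x => [|n] x.
  by rewrite !big_ord0 big_geq.
congr (_ * _).
  rewrite big_mkcond big_ord_recl /= big1 ?mulr1; first by rewrite -(fgetE x d).
  by move=> i _.
pose G s := if (insub s : option 'I_n.+1) is Some o then
   \prod_(r < n.+1 | r.+1 == (o : nat)) tr (o + off)%N (x o) (x r) else 1.
transitivity (\prod_(s < n.+1) G s).
  by apply: eq_bigr => s _; rewrite /G valK.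
rewrite -(big_mkord xpredT G).
rewrite big_ltn // big_nat.
rewrite {1}/G insubT /= big_pred0 ?mul1r; last by [].
rewrite [in RHS]big_nat; apply: eq_bigr => s /andP[s1 sn].
rewrite /G insubT /=.
case: s s1 sn => // s _ sn.
have sn' : (s < n.+1)%N by apply: ltnW.
rewrite (big_pred1 (Ordinal sn')) /=; last by move=> r; rewrite /= eqSS.
by rewrite !(fgetE' x d) /=.
Qed.

Lemma cnat_eq off init tr n g g' :
  (forall i, (i < n)%N -> g i = g' i) -> cnat off init tr n g = cnat off init tr n g'.
Proof.
move=> H; rewrite /cnat; case: n H => [|n] H; first by rewrite !big_geq.
rewrite H //; congr (_ * _); apply: eq_big_nat => s /andP[s1 sn].
rewrite !H //; apply: leq_ltn_trans sn; exact: leq_pred.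
Qed.

Lemma cnat_tr off init tr tr' n g :
  (forall s a b, (1 <= s < n)%N -> tr (s + off)%N a b = tr' (s + off)%N a b) ->
  cnat off init tr n g = cnat off init tr' n g.
Proof.
move=> H; rewrite /cnat; congr (_ * _); apply: eq_big_nat => s sn; exact: H.
Qed.

Lemma cnat_init off init init' tr n g :
  (forall a, init a = init' a) -> cnat off init tr n g = cnat off init' tr n g.
Proof. by move=> H; rewrite /cnat; case: n => // n; rewrite H. Qed.

Lemma cnat_pos off init tr n g : (0 < n)%N ->
  cnat off init tr n g = init (g 0%N) * \prod_(1 <= s < n) tr (s + off)%N (g s) (g s.-1).
Proof. by case: n. Qed.

Lemma cnat_S off init tr n g : (0 < n)%N ->
  cnat off init tr n.+1 g = cnat off init tr n g * tr (n + off)%N (g n) (g n.-1).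
Proof. by case: n => // n _; rewrite /cnat big_nat_recr //= mulrA. Qed.

Definition ext {n} (f : {ffun 'I_n -> st}) (y : st) : {ffun 'I_n.+1 -> st} :=
  [ffun i : 'I_n.+1 => if ((i : nat) < n)%N then fget f y i else y].
Definition restr {n} (x : {ffun 'I_n.+1 -> st}) : {ffun 'I_n -> st} :=
  [ffun j : 'I_n => x (widen_ord (leqnSn n) j)].

Lemma sum_ext n (F : {ffun 'I_n.+1 -> st} -> R) :
  \sum_x F x = \sum_(f : {ffun 'I_n -> st}) \sum_y F (ext f y).
Proof.
rewrite pair_big /= (reindex (fun p : {ffun 'I_n -> st} * st => ext p.1 p.2)) //.
apply: onW_bij; exists (fun x => (restr x, x ord_max)).
  case=> f y /=; congr (_, _).
    apply/ffunP => j; rewrite !ffunE /= ltn_ord; exact: fgetE.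
  by rewrite ffunE /= ltnn.
move=> x; apply/ffunP => i; rewrite ffunE.
case: ltnP => H.
  by rewrite (fgetE' _ _ H) ffunE; congr (x _); apply: val_inj.
have -> // : i = ord_max by apply: val_inj => /=; apply/eqP; rewrite eqn_leq H -ltnS ltn_ord.
Qed.

Lemma fget_ext n (f : {ffun 'I_n -> st}) y d i :
  (i < n.+1)%N -> fget (ext f y) d i = if (i < n)%N then fget f d i else y.
Proof.
move=> H; rewrite (fgetE' _ _ H) ffunE /=; case: ifP => // h.
by rewrite !(fgetE' _ _ h).
Qed.

Lemma chain_sum n off (init : st -> R) (tr : nat -> st -> st -> R) :
  (forall s y', (1 <= s < n)%N -> \sum_y tr (s + off)%N y y' = 1) ->
  \sum_(x : {ffun 'I_n -> st}) chain_prob off init tr x =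
     if n is 0 then 1 else \sum_y init y.
Proof.
elim: n => [|n IH] H.
  rewrite (eq_bigr (fun _ => (1 : R))); last by move=> x _; rewrite /chain_prob !big_ord0 mulr1.
  by rewrite sumr_const card_ffun !card_ord expn0.
rewrite sum_ext.
case: n IH H => [|n] IH H.
  rewrite (eq_bigr (fun _ => \sum_y init y)).
    by rewrite sumr_const card_ffun !card_ord expn0 mulr1n.
  move=> f _; apply: eq_bigr => y _; rewrite (chainE _ _ _ _ y) /cnat big_geq // mulr1.
  by rewrite fget_ext.
have IH' : \sum_(x : {ffun 'I_n.+1 -> st}) chain_prob off init tr x = \sum_y init y.
  apply: IH => s y' /andP[h1 h2]; apply: H; rewrite h1; exact: ltnW.
rewrite -IH'; apply: eq_bigr => f _.
rewrite (eq_bigr (fun y => chain_prob off init tr f * tr (n.+1 + off)%N y (f ord_max))).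
  by rewrite -mulr_sumr H ?mulr1 // ltnSn.
move=> y _; rewrite (chainE _ _ _ _ y) cnat_S // (chainE _ _ _ _ y); congr (_ * _).
  by apply: cnat_eq => i hi; rewrite fget_ext // ?hi //; apply: ltnW.
  by rewrite !fget_ext // ltnn ltnSn /= -(fgetE f y).
Qed.

Definition jn k n4 (x1 : {ffun 'I_k -> st}) (x2 x3 : st) (x4 : {ffun 'I_n4 -> st}) (i : nat) : st :=
  if (i < k)%N then fget x1 x2 i else if i == k then x2 else if i == k.+1 then x3
  else fget x4 x2 (i - k.+2).

Lemma cnat_jn k n4 init tr (x1 : {ffun 'I_k -> st}) x2 x3 (x4 : {ffun 'I_n4 -> st}) : (0 < k)%N -> (0 < n4)%N ->
  cnat 1 init tr (k + 2 + n4) (jn x1 x2 x3 x4) =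
  cnat 1 init tr k (fget x1 x2) * tr k.+1 x2 (fget x1 x2 k.-1) * tr k.+2 x3 x2 *
  cnat k.+3 (fun y => tr k.+3 y x3) tr n4 (fget x4 x2).
Proof.
case: k x1 => // k x1 _; case: n4 x4 => // n4 x4 _.
rewrite /cnat addSn /=.
rewrite (@big_cat_nat _ _ _ k.+1) //=; last by lia.
rewrite (@big_cat_nat _ _ _ k.+3 k.+1) //=; last by lia.
have e_mid : \prod_(k.+1 <= i < k.+3) tr (i + 1)%N (jn x1 x2 x3 x4 i) (jn x1 x2 x3 x4 i.-1)
   = tr k.+2 x2 (fget x1 x2 k) * tr k.+3 x3 x2.
  rewrite big_ltn_cond // big_ltn_cond // big_geq // mulr1 /jn /= ltnSn ltnn eqxx.
  rewrite !addn1 ltnNge leqW //= (_ : (k.+2 == k.+1) = false) ?eqxx //; lia.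
have e_last : \prod_(k.+3 <= i < (k + 2).+1 + n4.+1)
       tr (i + 1)%N (jn x1 x2 x3 x4 i) (jn x1 x2 x3 x4 i.-1) =
   \prod_(0 <= i < n4.+1) tr (i + k.+3 + 1)%N (jn x1 x2 x3 x4 (i + k.+3))
               (jn x1 x2 x3 x4 (i + k.+3).-1).
  rewrite -{1}(add0n k.+3) big_addn.
  by have -> : ((k + 2).+1 + n4.+1 - k.+3 = n4.+1)%N by lia.
rewrite e_mid e_last.
have e1 : \prod_(1 <= i < k.+1) tr (i + 1)%N (jn x1 x2 x3 x4 i) (jn x1 x2 x3 x4 i.-1) =
          \prod_(1 <= s < k.+1) tr (s + 1)%N (fget x1 x2 s) (fget x1 x2 s.-1).
  apply: eq_big_nat => i /andP[h1 h2]; rewrite /jn h2.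
  have -> : (i.-1 < k.+1)%N by lia.
  by [].
have e2 : \prod_(1 <= i < n4.+1) tr (i + k.+3 + 1)%N (jn x1 x2 x3 x4 (i + k.+3))
               (jn x1 x2 x3 x4 (i + k.+3).-1) =
          \prod_(1 <= s < n4.+1) tr (s + k.+4)%N (fget x4 x2 s) (fget x4 x2 s.-1).
  apply: eq_big_nat => i /andP[h1 h2]; rewrite /jn.
  have -> : (i + k.+3 < k.+1)%N = false by lia.
  have -> : (i + k.+3 == k.+1) = false by lia.
  have -> : (i + k.+3 == k.+2) = false by lia.
  have -> : ((i + k.+3).-1 < k.+1)%N = false by lia.
  have -> : ((i + k.+3).-1 == k.+1) = false by lia.
  have -> : ((i + k.+3).-1 == k.+2) = false by lia.
  have -> : (i + k.+3 - k.+3 = i)%N by lia.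
  have -> : ((i + k.+3).-1 - k.+3 = i.-1)%N by lia.
  by have -> : (i + k.+3 + 1 = i + k.+4)%N by lia.
rewrite e1 [\prod_(0 <= i < n4.+1) _]big_ltn_cond //= e2.
rewrite /jn /= !add0n addn1 ltnNge leqW //= (_ : (k.+2 == k.+1) = false) ?eqxx; last by lia.
have -> : (k.+3 == k.+1) = false by lia.
have -> : (k.+3 == k.+2) = false by lia.
have -> : (k.+2 < k.+1)%N = false by lia.
rewrite subnn; ring.
all: lia.
Qed.

Lemma chain_sum_pos n off (init : st -> R) (tr : nat -> st -> st -> R) : (0 < n)%N ->
  (forall s y', (1 <= s < n)%N -> \sum_y tr (s + off)%N y y' = 1) ->
  \sum_(x : {ffun 'I_n -> st}) chain_prob off init tr x = \sum_y init y.
Proof. by case: n => // n _ H; rewrite chain_sum. Qed.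
End Chain.


Section Model2.
Variables (R : realType) (K J T0 T k : nat).
Hypotheses (k1 : (0 < k)%N) (kT : (k.+3 <= T)%N) (kT0 : (k.+1 <= T0)%N).
Local Notation st := 'I_K.
Local Notation xi1 := {ffun 'I_k -> st}.
Local Notation xi4 := {ffun 'I_(T - k.+2) -> st}.
Local Notation par := (param R K J).

Definition join (x1 : xi1) (x2 x3 : st) (x4 : xi4) : {ffun 'I_T -> st} :=
  [ffun i : 'I_T => jn x1 x2 x3 x4 i].

Lemma chain_join (init : st -> R) tr x1 x2 x3 x4 :
  chain_prob 1 init tr (join x1 x2 x3 x4) =
  chain_prob 1 init tr x1 * tr k.+1 x2 (fget x1 x2 k.-1) * tr k.+2 x3 x2 *
  chain_prob k.+3 (fun y => tr k.+3 y x3) tr x4.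
Proof.
rewrite !(chainE _ _ _ _ x2).
have eT : T = (k + 2 + (T - k.+2))%N by lia.
rewrite -(cnat_jn init tr x1 x2 x3 x4 k1); last by lia.
rewrite -eT; apply: cnat_eq => i hi; by rewrite (fgetE' _ _ hi) ffunE.
Qed.

Lemma q21E (psi : par) j x2 (x1 : xi1) d : q21 psi j x2 x1 = p0 psi j k.+1 x2 (fget x1 d k.-1).
Proof.
have hk : (k.-1 < k)%N by lia.
rewrite /q21 (big_pred1 (Ordinal hk)) ?(fgetE' _ _ hk) // => s /=.
by apply/eqP/eqP => [h|-> /=]; [apply: val_inj => /=; lia | lia].
Qed.

Lemma pW_join_false (psi : par) x1 x2 x3 x4 :
  pW T0 psi (join x1 x2 x3 x4) false =
  \sum_j pi_ psi j * (P1 psi j x1 false * q21 psi j x2 x1 * q32 k psi j x3 x2 * q43 psi j x4 x3).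
Proof.
apply: eq_bigr => j _ /=; rewrite chain_join (q21E _ _ _ _ x2) //.
Qed.

Definition Wp (psi : par) (x : {ffun 'I_T -> st}) : R :=
  \sum_j pi_ psi j * chain_prob 1 (fun y => pXD psi j y true) (p0 psi j) x.

Lemma W_join (psi : par) x1 x2 x3 x4 :
  Wp psi (join x1 x2 x3 x4) =
  \sum_j pi_ psi j * (P1 psi j x1 true * q21 psi j x2 x1 * q32 k psi j x3 x2 * q43 psi j x4 x3).
Proof. by apply: eq_bigr => j _ /=; rewrite chain_join (q21E _ _ _ _ x2). Qed.

Lemma pW_join_true (psi : par) x1 x2 x3 x4 :
  pW T0 psi (join x1 x2 x3 x4) true =
  \sum_j pi_ psi j * (P1 psi j x1 true * q21 psi j x2 x1 *
    (tr_treated T0 psi j k.+2 x3 x2 *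
     chain_prob k.+3 (fun y => tr_treated T0 psi j k.+3 y x3) (tr_treated T0 psi j) x4)).
Proof.
apply: eq_bigr => j _ /=; rewrite chain_join (q21E _ _ _ _ x2).
have -> : tr_treated T0 psi j k.+1 = p0 psi j k.+1 by rewrite /tr_treated kT0.
rewrite /P1 !(chainE _ _ _ _ x2) (@cnat_tr _ _ _ _ _ (p0 psi j)); first by ring.
move=> s a b /andP[h1 h2]; rewrite /tr_treated.
by have -> : (s + 1 <= T0)%N by lia.
Qed.

Section Valid.
Variables (eps : R) (p : par).
Hypothesis vp : valid_param T0 T eps p.

Lemma sum_p0 j t y' : (2 <= t <= T)%N -> \sum_y p0 p j t y y' = 1.
Proof. by case: vp => _ _ [_ H] _ _ ht; apply: H. Qed.

Lemma sum_trt j t y' : (2 <= t <= T)%N -> \sum_y tr_treated T0 p j t y y' = 1.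
Proof.
move=> ht; rewrite /tr_treated; case: ifP => h; first exact: sum_p0.
by case: vp => _ _ _ [_ H] _; apply: H; lia.
Qed.

Lemma sum_q43 j x3 : \sum_(x4 : xi4) q43 p j x4 x3 = 1.
Proof.
rewrite /q43 chain_sum.
  have -> : (T - k.+2 = (T - k.+3).+1)%N by lia.
  by apply: sum_p0; lia.
move=> s y' hs; apply: sum_p0; lia.
Qed.

Lemma sum_q32 j x2 : \sum_x3 q32 k p j x3 x2 = 1.
Proof. by apply: sum_p0; lia. Qed.

Lemma sum_q21 j (x1 : xi1) : \sum_x2 q21 p j x2 x1 = 1.
Proof.
rewrite (eq_bigr (fun x2 => p0 p j k.+1 x2 (fget x1 x2 k.-1))) => [|x2 _]; last exact: q21E.
have hk : (k.-1 < k)%N by lia.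
rewrite (eq_bigr (fun x2 => p0 p j k.+1 x2 (x1 (Ordinal hk)))) => [|x2 _]; last by rewrite (fgetE' _ _ hk).
by apply: sum_p0; lia.
Qed.

Lemma sum_tail j x2 :
  \sum_x3 \sum_(x4 : xi4) (tr_treated T0 p j k.+2 x3 x2 *
     chain_prob k.+3 (fun y => tr_treated T0 p j k.+3 y x3) (tr_treated T0 p j) x4) = 1.
Proof.
rewrite -(@sum_trt j k.+2 x2); last lia.
apply: eq_bigr => x3 _; rewrite -mulr_sumr chain_sum.
  have -> : (T - k.+2 = (T - k.+3).+1)%N by lia.
  by rewrite sum_trt ?mulr1 //; lia.
move=> s y' hs; apply: sum_trt; lia.
Qed.
End Valid.
End Model2.


Section Gen.
Variables (R : realType) (J : nat).
Lemma unit_ker_r (A : 'M[R]_J) (z : 'I_J -> R) :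
  A \in unitmx -> (forall i, \sum_j A i j * z j = 0) -> forall j, z j = 0.
Proof.
move=> uA H j.
have E : A *m (\col_m z m) = 0.
  apply/matrixP => i l; rewrite !mxE; under eq_bigr do rewrite mxE; exact: H.
have : invmx A *m (A *m (\col_m z m)) = 0 by rewrite E mulmx0.
by rewrite mulKmx // => /matrixP /(_ j 0); rewrite !mxE.
Qed.
Lemma unit_ker_l (A : 'M[R]_J) (z : 'I_J -> R) :
  A \in unitmx -> (forall l, \sum_j z j * A j l = 0) -> forall j, z j = 0.
Proof.
move=> uA H; apply: (unit_ker_r (A := A^T)); first by rewrite unitmx_tr.
by move=> i; under eq_bigr do rewrite mxE mulrC; exact: H.
Qed.
End Gen.

Section IdSec.
Variables (R : realType) (K J T0 T k : nat).
Hypotheses (k1 : (0 < k)%N) (kT : (k.+3 <= T)%N) (kT0 : (k.+1 <= T0)%N).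
Local Notation st := 'I_K.
Local Notation xi1 := {ffun 'I_k -> st}.
Local Notation xi4 := {ffun 'I_(T - k.+2) -> st}.
Local Notation par := (param R K J).
Variables (eps : R) (psis psi : par).
Hypotheses (eps0 : 0 < eps) (vs : valid_param T0 T eps psis) (vp : valid_param T0 T eps psi).
Hypothesis hpW : forall (x : {ffun 'I_T -> st}) d, pW T0 psi x d = pW T0 psis x d.

Definition u (p : par) j (x1 : xi1) := pi_ p j * P1 p j x1 false.
Definition v (p : par) j (x1 : xi1) := pi_ p j * P1 p j x1 true.
Definition yv (p : par) j (x1 : xi1) x2 x3 := u p j x1 * q21 p j x2 x1 * q32 k p j x3 x2.
Definition Lu (p : par) x2 (a : 'I_J -> xi1) : 'M[R]_J :=
  \matrix_(i, j) (u p j (a i) * q21 p j x2 (a i)).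
Definition Mt (p : par) x3 (b : 'I_J -> xi4) : 'M[R]_J := (@Lmat R K J T k p x3 b)^T.
Local Notation jn := (@join K T k).

Lemma obs_row (p : par) (vp' : valid_param T0 T eps p)
   (hp : forall (x : {ffun 'I_T -> st}) d, pW T0 p x d = pW T0 psis x d) (x1 : xi1) (x2 x3 : st) (b : 'I_J -> xi4) (l : 'I_J) :
  (if (l : nat) == 0%N then \sum_(x4 : xi4) pW T0 psis (jn x1 x2 x3 x4) false
   else pW T0 psis (jn x1 x2 x3 (b l)) false) =
  \sum_j yv p j x1 x2 x3 * Mt p x3 b j l.
Proof.
rewrite (eq_bigr (fun j => yv p j x1 x2 x3 * (if (l : nat) == 0%N then 1 else q43 p j (b l) x3)));
  last by move=> j _; rewrite !mxE.
case: ifP => _.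
  rewrite (eq_bigr (fun x4 => pW T0 p (jn x1 x2 x3 x4) false)) => [|x4 _]; last by rewrite hp.
  rewrite (eq_bigr (fun x4 => \sum_j yv p j x1 x2 x3 * q43 p j x4 x3)) => [|x4 _].
    rewrite exchange_big /=; apply: eq_bigr => j _.
    by rewrite -mulr_sumr (sum_q43 k1 kT kT0 vp') mulr1.
  by rewrite (pW_join_false k1 kT kT0); apply: eq_bigr => j _; rewrite /yv /u; ring.
rewrite -hp (pW_join_false k1 kT kT0); apply: eq_bigr => j _; rewrite /yv /u; ring.
Qed.

Lemma Lu_unit x2 (a : 'I_J -> xi1) : Lbar psis x2 a \in unitmx -> Lu psis x2 a \in unitmx.
Proof.
have -> : Lbar psis x2 a = diag_mx (\row_i (\sum_m pi_ psis m * P1 psis m (a i) false)^-1)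
                           *m Lu psis x2 a.
  apply/matrixP => i j; rewrite /Lbar mul_diag_mx !mxE /lam1 /tau /u; ring.
by rewrite unitmx_mul => /andP[].
Qed.

Lemma invmx_diag (r : 'rV[R]_J) : (forall j, r 0 j != 0) ->
  invmx (diag_mx r) = diag_mx (\row_j (r 0 j)^-1).
Proof.
move=> nz.
have uD : diag_mx r \in unitmx.
  have -> : r = \row_j r 0 j by apply/rowP => j; rewrite mxE.
  by rewrite diag_unit; apply/forallP => j; exact: nz.
have E : diag_mx r *m diag_mx (\row_j (r 0 j)^-1) = 1%:M.
  rewrite mulmx_diag; apply/matrixP => i j; rewrite !mxE.
  by case: eqP => [->|]; rewrite ?mulr1n ?mulr0n // mulfV.
by rewrite -[RHS](mulKmx uD) E mulmx1.
Qed.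

Lemma Dmat_entry x3 cx2 bx2 bx3 j :
  (forall j x3 x2, 0 < q32 k psis j x3 x2) ->
  (Dmat k psis x3 cx2 *m invmx (Dmat k psis bx3 cx2) *m Dmat k psis bx3 bx2
     *m invmx (Dmat k psis x3 bx2)) j j =
  q32 k psis j x3 cx2 / q32 k psis j bx3 cx2 * q32 k psis j bx3 bx2 / q32 k psis j x3 bx2.
Proof.
move=> pos; rewrite /Dmat !invmx_diag; last 2 first.
- by move=> m; rewrite mxE gt_eqF.
- by move=> m; rewrite mxE gt_eqF.
by rewrite !mulmx_diag !mxE eqxx mulr1n.
Qed.

Definition Obs x2 x3 (a : 'I_J -> xi1) (b : 'I_J -> xi4) : 'M[R]_J :=
  \matrix_(i, l) (if (l : nat) == 0%N then \sum_(x4 : xi4) pW T0 psis (jn (a i) x2 x3 x4) false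
   else pW T0 psis (jn (a i) x2 x3 (b l)) false).

Lemma Pm_Obs (p : par) (vp' : valid_param T0 T eps p)
   (hp : forall (x : {ffun 'I_T -> st}) d, pW T0 p x d = pW T0 psis x d) x2 x3 a b :
  Pm (Lu p x2 a) (fun j => q32 k p j x3 x2) (Mt p x3 b) = Obs x2 x3 a b.
Proof.
apply/matrixP => i l; rewrite /Pm mul_mx_diag [RHS]mxE (obs_row vp' hp) mxE.
by apply: eq_bigr => j _; rewrite !mxE.
Qed.

Lemma stepB x3 cx2 bx2 bx3 (a : 'I_J -> xi1) (b : 'I_J -> xi4) (i0 : 'I_J) :
  (i0 : nat) = 0%N ->
  (forall j x3 x2, 0 < q32 k psis j x3 x2) ->
  Lbar psis cx2 a \in unitmx -> Lbar psis bx2 a \in unitmx ->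
  Lmat psis x3 b \in unitmx -> Lmat psis bx3 b \in unitmx ->
  injective (fun j => (Dmat k psis x3 cx2 *m invmx (Dmat k psis bx3 cx2) *m Dmat k psis bx3 bx2
                 *m invmx (Dmat k psis x3 bx2)) j j) ->
  exists s : 'I_J -> 'I_J, [/\ injective s, (forall j l, Mt psi x3 b j l = Mt psis x3 b (s j) l),
     Lu psi cx2 a \in unitmx, (forall j, q32 k psi j x3 cx2 != 0) & Mt psi x3 b \in unitmx].
Proof.
move=> hi0 pos uLc uLb uM uMb inj.
have E c x : Pm (Lu psis c a) (fun j => q32 k psis j x c) (Mt psis x b) =
             Pm (Lu psi c a) (fun j => q32 k psi j x c) (Mt psi x b).
  by rewrite (Pm_Obs vp hpW) (Pm_Obs vs (fun _ _ => erefl)).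
have U c x : Lu psis c a \in unitmx -> Lmat psis x b \in unitmx ->
    Pm (Lu psis c a) (fun j => q32 k psis j x c) (Mt psis x b) \in unitmx.
  move=> h1 h2; rewrite Pm_unit h1 /Mt unitmx_tr h2 andbT.
  by apply/forallP => j; rewrite gt_eqF.
have U1 := U _ _ (Lu_unit uLc) uM.
have U1' := U1; rewrite E Pm_unit in U1'.
case/and3P: U1' => uLc' /forallP nz' uM'.
have c0 : forall j, Mt psis x3 b j i0 = 1 by move=> j; rewrite /Mt !mxE hi0 eqxx.
have c0' : forall j, Mt psi x3 b j i0 = 1 by move=> j; rewrite /Mt !mxE hi0 eqxx.
have [s [sinj sM]] := partB (E cx2 x3) (E cx2 bx3) (E bx2 bx3) (E bx2 x3)
   U1 (U _ _ (Lu_unit uLc) uMb) (U _ _ (Lu_unit uLb) uMb) (U _ _ (Lu_unit uLb) uM)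
   (eq_inj inj (fun j => Dmat_entry _ _ _ _ j pos))
   c0 c0'.
by exists s; split.
Qed.

Lemma H_eq (p : par) (x1 : xi1) x2 x3 (x4 : xi4) :
  pW T0 p (jn x1 x2 x3 x4) false = \sum_j yv p j x1 x2 x3 * q43 p j x4 x3.
Proof. by rewrite (pW_join_false k1 kT kT0); apply: eq_bigr => j _; rewrite /yv /u; ring. Qed.

Lemma reidx (s : 'I_J -> 'I_J) (F : 'I_J -> R) : injective s -> \sum_j F (s j) = \sum_j F j.
Proof. by move=> sinj; rewrite [RHS](reindex_inj sinj). Qed.

Lemma C1 x3 b s : injective s -> (forall j l, Mt psi x3 b j l = Mt psis x3 b (s j) l) ->
  Mt psi x3 b \in unitmx -> forall x1 x2 j, yv psi j x1 x2 x3 = yv psis (s j) x1 x2 x3.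
Proof.
move=> sinj sM uM' x1 x2.
have h l : \sum_j (yv psis (s j) x1 x2 x3 - yv psi j x1 x2 x3) * Mt psi x3 b j l = 0.
  under eq_bigr do rewrite mulrBl; rewrite sumrB.
  rewrite -(obs_row vp hpW).
  under eq_bigr do rewrite sM; rewrite (reidx (fun j => yv psis j x1 x2 x3 * Mt psis x3 b j l) sinj).
  by rewrite -(obs_row vs (fun _ _ => erefl)) subrr.
move=> j; apply/eqP; rewrite eq_sym -subr_eq0; apply/eqP; exact: (unit_ker_l uM' h).
Qed.

Lemma C2 x3 c (a : 'I_J -> xi1) s : injective s ->
  (forall x1 x2 j, yv psi j x1 x2 x3 = yv psis (s j) x1 x2 x3) ->
  Lu psi c a \in unitmx -> (forall j, q32 k psi j x3 c != 0) ->
  forall (x4 : xi4) j, q43 psi j x4 x3 = q43 psis (s j) x4 x3.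
Proof.
move=> sinj hy uL nz x4.
have uY : Lu psi c a *m diag_mx (\row_j q32 k psi j x3 c) \in unitmx.
  by rewrite unitmx_mul uL diag_unit; apply/forallP.
have h i : \sum_j (Lu psi c a *m diag_mx (\row_j q32 k psi j x3 c)) i j *
     (q43 psis (s j) x4 x3 - q43 psi j x4 x3) = 0.
  rewrite mul_mx_diag.
  under eq_bigr do rewrite !mxE mulrBr; rewrite sumrB.
  have e j : u psi j (a i) * q21 psi j c (a i) * q32 k psi j x3 c = yv psi j (a i) c x3 by [].
  under eq_bigr do rewrite e hy.
  under [X in _ - X]eq_bigr do rewrite e.
  rewrite (reidx (fun j => yv psis j (a i) c x3 * q43 psis j x4 x3) sinj).
  by rewrite -!H_eq hpW subrr.
move=> j; apply/eqP; rewrite eq_sym -subr_eq0; apply/eqP; exact: (unit_ker_r uY h).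
Qed.

Lemma sum_if1 (F : 'I_J -> R) x (c : R) :
  \sum_m F m * (if m == x then c else 0) = F x * c.
Proof.
rewrite (bigD1 x) //= eqxx big1 ?addr0 // => m /negbTE ->; by rewrite mulr0.
Qed.

Lemma C3 xa xb c (a : 'I_J -> xi1) s1 s2 :
  (forall x1 x2 j, yv psi j x1 x2 xa = yv psis (s1 j) x1 x2 xa) ->
  (forall x1 x2 j, yv psi j x1 x2 xb = yv psis (s2 j) x1 x2 xb) ->
  Lu psis c a \in unitmx -> (forall j x3 x2, 0 < q32 k psis j x3 x2) ->
  (forall j, q32 k psi j xb c != 0) -> forall j, s1 j = s2 j.
Proof.
move=> ha hb uL pos nz j; apply/eqP; apply/negPn/negP => ne.
set al := q32 k psi j xa c; set be := q32 k psi j xb c.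
set g1 := q32 k psis (s1 j) xa c; set g2 := q32 k psis (s2 j) xb c.
pose z m := (if m == s1 j then g1 * be else 0) - (if m == s2 j then g2 * al else 0).
have yL (p : par) i j' x : yv p j' (a i) c x = Lu p c a i j' * q32 k p j' x c by rewrite /yv mxE.
have h i : \sum_m Lu psis c a i m * z m = 0.
  under eq_bigr do rewrite mulrBr; rewrite sumrB !sum_if1.
  have e1 := ha (a i) c j; have e2 := hb (a i) c j.
  rewrite !yL in e1 e2.
  rewrite !mulrA -/g1 -/g2 -e1 -e2 -/al -/be; ring.
have := unit_ker_r uL h (s1 j); rewrite /z eqxx (negbTE ne) subr0.
have g1p : 0 < g1 by apply: pos.
have bn : be != 0 by apply: nz.
by move/eqP; rewrite mulf_eq0 (gt_eqF g1p) (negbTE bn).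
Qed.

Lemma C4 s : (forall x1 x2 x3 j, yv psi j x1 x2 x3 = yv psis (s j) x1 x2 x3) ->
  (forall x1 x2 j, u psi j x1 * q21 psi j x2 x1 = u psis (s j) x1 * q21 psis (s j) x2 x1) /\
  (forall x1 j, u psi j x1 = u psis (s j) x1).
Proof.
move=> hy.
have h1 x1 x2 j : u psi j x1 * q21 psi j x2 x1 = u psis (s j) x1 * q21 psis (s j) x2 x1.
  have : \sum_x3 yv psi j x1 x2 x3 = \sum_x3 yv psis (s j) x1 x2 x3.
    by apply: eq_bigr => x3 _; exact: hy.
  rewrite /yv -!mulr_sumr (sum_q32 k1 kT kT0 vp) (sum_q32 k1 kT kT0 vs) !mulr1 //.
split => // x1 j.
have : \sum_x2 (u psi j x1 * q21 psi j x2 x1) = \sum_x2 (u psis (s j) x1 * q21 psis (s j) x2 x1).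
  by apply: eq_bigr => x2 _; exact: h1.
by rewrite -!mulr_sumr (sum_q21 k1 kT kT0 vp) (sum_q21 k1 kT kT0 vs) !mulr1.
Qed.

Lemma P1_split (p : par) j (x1 : xi1) : exists y0 r, forall d, P1 p j x1 d = pXD p j y0 d * r.
Proof.
pose d0 := x1 (Ordinal k1).
exists (fget x1 d0 0); exists (\prod_(1 <= s < k) p0 p j (s + 1)%N (fget x1 d0 s) (fget x1 d0 s.-1)).
by move=> d; rewrite /P1 (chainE _ _ _ _ d0) cnat_pos.
Qed.

Lemma overlap (p : par) (vp' : valid_param T0 T eps p) j (x1 : xi1) :
  u p j x1 = 0 -> v p j x1 = 0.
Proof.
case: (P1_split p j x1) => y0 [r H]; rewrite /u /v !H.
case: vp' => [[_ pib] [pX0 _] _ _ ov].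
have pip : 0 < pi_ p j by case/andP: (pib j) => h _; exact: lt_le_trans h.
move/eqP; rewrite !mulf_eq0 (gt_eqF pip) /= => /orP[/eqP f0|/eqP ->]; last by rewrite !mulr0.
case: (ov j y0); rewrite f0 add0r => _ h.
have t0 := pX0 j y0 true.
rewrite mulrBl mul1r in h.
have h2 : eps * pXD p j y0 true <= 0 by lra.
rewrite pmulr_rle0 // in h2.
have -> : pXD p j y0 true = 0 by apply/eqP; rewrite eq_le h2 t0.
by rewrite !mul0r mulr0.
Qed.

Lemma obs1 (p : par) (vp' : valid_param T0 T eps p) (x1 : xi1) x2 :
  \sum_x3 \sum_(x4 : xi4) pW T0 p (jn x1 x2 x3 x4) true = \sum_j v p j x1 * q21 p j x2 x1.
Proof.
under eq_bigr do under eq_bigr do rewrite (pW_join_true k1 kT kT0).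
under eq_bigr do rewrite exchange_big; rewrite exchange_big /=.
apply: eq_bigr => j _.
set c := v p j x1 * q21 p j x2 x1.
rewrite -[RHS]mulr1 -(sum_tail k1 kT kT0 vp' j x2) (mulr_sumr _ _ _ c).
apply: eq_bigr => x3 _; rewrite (mulr_sumr _ _ _ c); apply: eq_bigr => x4 _.
rewrite /c /v; ring.
Qed.

Lemma C5 s : injective s ->
  (forall x1 x2 j, u psi j x1 * q21 psi j x2 x1 = u psis (s j) x1 * q21 psis (s j) x2 x1) ->
  (forall x1 j, u psi j x1 = u psis (s j) x1) ->
  (forall x1 : xi1, exists c : 'I_J -> st, \matrix_(i, j) q21 psis j (c i) x1 \in unitmx) ->
  forall x1 j, v psi j x1 = v psis (s j) x1.
Proof.
move=> sinj huq hu IDc x1; case: (IDc x1) => c uQ.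
have key x2 : \sum_j q21 psis (s j) x2 x1 * (v psi j x1 - v psis (s j) x1) = 0.
  under eq_bigr do rewrite mulrBr; rewrite sumrB.
  rewrite (reidx (fun j => q21 psis j x2 x1 * v psis j x1) sinj).
  have -> : \sum_j q21 psis (s j) x2 x1 * v psi j x1 = \sum_j v psi j x1 * q21 psi j x2 x1.
    apply: eq_bigr => j _.
    case: (eqVneq (v psi j x1) 0) => [->|nv]; first by rewrite !mul0r mulr0.
    have nu : u psi j x1 != 0 by apply: contra nv => /eqP /(overlap vp) ->.
    have e := huq x1 x2 j; rewrite hu in e nu.
    rewrite mulrC; congr (_ * _); apply: (mulfI nu); by rewrite e.
  have -> : \sum_j q21 psis j x2 x1 * v psis j x1 = \sum_j v psis j x1 * q21 psis j x2 x1.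
    by apply: eq_bigr => j _; rewrite mulrC.
  rewrite -(obs1 vp) -(obs1 vs).
  under eq_bigr do under eq_bigr do rewrite hpW.
  by rewrite subrr.
pose z m := v psi (invF sinj m) x1 - v psis m x1.
have h i : \sum_m (\matrix_(i, j) q21 psis j (c i) x1) i m * z m = 0.
  rewrite -(reidx (fun m => (\matrix_(i, j) q21 psis j (c i) x1) i m * z m) sinj).
  apply: etrans (key (c i)); apply: eq_bigr => j _; by rewrite mxE /z invF_f.
move=> j; have := unit_ker_r uQ h (s j); rewrite /z invF_f.
by move/eqP; rewrite subr_eq0 => /eqP.
Qed.

Lemma C6 s : injective s ->
  (forall x1 x2 x3 j, yv psi j x1 x2 x3 = yv psis (s j) x1 x2 x3) ->
  (forall x3 (x4 : xi4) j, q43 psi j x4 x3 = q43 psis (s j) x4 x3) ->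
  (forall x1 j, u psi j x1 = u psis (s j) x1) ->
  (forall x1 j, v psi j x1 = v psis (s j) x1) ->
  forall x1 x2 x3 x4, Wp psi (jn x1 x2 x3 x4) = Wp psis (jn x1 x2 x3 x4).
Proof.
move=> sinj hy hq hu hv x1 x2 x3 x4; rewrite !(W_join k1 kT kT0).
rewrite -(reidx (fun j => pi_ psis j * (P1 psis j x1 true * q21 psis j x2 x1 *
      q32 k psis j x3 x2 * q43 psis j x4 x3)) sinj).
apply: eq_bigr => j _.
have e (p : par) j' : pi_ p j' * (P1 p j' x1 true * q21 p j' x2 x1 * q32 k p j' x3 x2 * q43 p j' x4 x3)
   = v p j' x1 * q21 p j' x2 x1 * q32 k p j' x3 x2 * q43 p j' x4 x3 by rewrite /v; ring.
rewrite !e.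
case: (eqVneq (v psi j x1) 0) => [v0|nv].
  by rewrite v0 -(hv x1 j) v0 !mul0r.
have nu : u psi j x1 != 0 by apply: contra nv => /eqP /(overlap vp) ->.
have nu' := nu; rewrite hu in nu'.
have -> : v psi j x1 * q21 psi j x2 x1 * q32 k psi j x3 x2 =
          v psi j x1 / u psi j x1 * yv psi j x1 x2 x3 by rewrite /yv; field.
by rewrite hy hq hv hu /yv; field.
Qed.

Lemma W_eq : (0 < J)%N -> ID_cond T k psis ->
  forall x1 x2 x3 x4, Wp psi (jn x1 x2 x3 x4) = Wp psis (jn x1 x2 x3 x4).
Proof.
move=> J0 [[xs3 Ha] [pos _] IDc _].
pose i0 := Ordinal J0.
have ex x3 : exists s c (a : 'I_J -> xi1), [/\ injective s,
     (forall x1 x2 j, yv psi j x1 x2 x3 = yv psis (s j) x1 x2 x3),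
     (forall (x4 : xi4) j, q43 psi j x4 x3 = q43 psis (s j) x4 x3),
     Lu psis c a \in unitmx & (forall j, q32 k psi j x3 c != 0)].
  case: (Ha x3) => cx2 [bx2 [bx3 [a [b [[u1 u2 u3 u4 u5] inj]]]]].
  case: (@stepB x3 cx2 bx2 bx3 a b i0 erefl pos u1 u2 u3 u5 inj) => s [sinj sM uL' nz' uM'].
  have hy3 := C1 sinj sM uM'.
  exists s, cx2, a; split => //; last exact: Lu_unit.
  exact: C2 sinj hy3 uL' nz'.
case: (ex xs3) => ss [_ [_ [sinj hys _ _ _]]].
have hy x1 x2 x3 j : yv psi j x1 x2 x3 = yv psis (ss j) x1 x2 x3.
  case: (ex x3) => s [c [a [_ hy3 _ uL nz]]].
  by rewrite (C3 hys hy3 uL pos nz j); exact: hy3.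
have hq x3 (x4 : xi4) j : q43 psi j x4 x3 = q43 psis (ss j) x4 x3.
  case: (ex x3) => s [c [a [_ hy3 hq3 uL nz]]].
  by rewrite (C3 hys hy3 uL pos nz j); exact: hq3.
have [huq hu] := C4 hy.
have hv := C5 sinj huq hu IDc.
exact: C6 sinj hy hq hu hv.
Qed.
End IdSec.


Lemma join_surj (K T k : nat) (K0 : (0 < K)%N) (k1 : (0 < k)%N) (kT : (k.+3 <= T)%N)
  (x : {ffun 'I_T -> 'I_K}) :
  exists x1 x2 x3 (x4 : {ffun 'I_(T - k.+2) -> 'I_K}), x = join x1 x2 x3 x4.
Proof.
pose d0 : 'I_K := Ordinal K0.
pose g := fget x d0.
exists [ffun i : 'I_k => g i], (g k), (g k.+1), [ffun i : 'I_(T - k.+2) => g (i + k.+2)%N].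
apply/ffunP => i; rewrite ffunE /jn.
have gi : g i = x i by rewrite /g fgetE.
case: ifP => h1; first by rewrite (fgetE' _ _ h1) ffunE.
case: ifP => h2; first by rewrite -gi (eqP h2).
case: ifP => h3; first by rewrite -gi (eqP h3).
have h4 : (i - k.+2 < T - k.+2)%N.
  have := ltn_ord i; move: h1 h2 h3; lia.
rewrite (fgetE' _ _ h4) ffunE /= -gi; congr (g _).
move: h1 h2 h3; lia.
Qed.

Section Final.
Variables (R : realType) (K J T0 T : nat) (eps : R) (p : param R K J).
Hypotheses (eps0 : 0 < eps) (T0T : (T0 < T)%N) (vp : valid_param T0 T eps p) (J0 : (0 < J)%N).

Lemma PD1_pos j : 0 < PD1_Z p j.
Proof.
case: vp => _ [_ hs] _ _ ov.
apply: (@lt_le_trans _ _ (eps * 1)); first by rewrite mulr1.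
rewrite -(hs j) mulr_sumr /PD1_Z; apply: ler_sum => x _.
by rewrite big_bool /= addrC; case: (ov j x).
Qed.

Lemma ATT_formula t :
  ATT T0 T p t = \row_k0 ((\sum_(x : {ffun 'I_T -> 'I_K}) stateAt R x t k0 *
       (pW T0 p x true - Wp p x)) / \sum_(x : {ffun 'I_T -> 'I_K}) pW T0 p x true).
Proof.
have eS : \sum_(x : {ffun 'I_T -> 'I_K}) pW T0 p x true = \sum_m PZD1 p m.
  rewrite /pW exchange_big /=; apply: eq_bigr => j _.
  rewrite -mulr_sumr chain_sum_pos; [by []|lia|].
  move=> s y' hs; rewrite /tr_treated; case: ifP => h.
    by case: vp => _ _ [_ H] _ _; apply: H; lia.
  by case: vp => _ _ _ [_ H] _; apply: H; lia.
apply/rowP => k0; rewrite /ATT summxE !mxE eS.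
rewrite (eq_bigr (fun j => pi_ p j * (\sum_(x : {ffun 'I_T -> 'I_K}) stateAt R x t k0 *
      chain_prob 1 (fun x1 => pXD p j x1 true) (tr_treated T0 p j) x -
    \sum_(x : {ffun 'I_T -> 'I_K}) stateAt R x t k0 *
      chain_prob 1 (fun x1 => pXD p j x1 true) (p0 p j) x) / \sum_m PZD1 p m)).
  rewrite -mulr_suml; congr (_ / _).
  have eR : \sum_(x : {ffun 'I_T -> 'I_K}) stateAt R x t k0 * (pW T0 p x true - Wp p x) =
    \sum_(x : {ffun 'I_T -> 'I_K}) \sum_j stateAt R x t k0 *
     (pi_ p j * chain_prob 1 (fun x1 => pXD p j x1 true) (tr_treated T0 p j) x -
      pi_ p j * chain_prob 1 (fun x1 => pXD p j x1 true) (p0 p j) x).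
    by apply: eq_bigr => x _; rewrite /pW /Wp -sumrB mulr_sumr.
  rewrite eR exchange_big /=; apply: eq_bigr => j _.
  rewrite mulrBr !mulr_sumr -sumrB; apply: eq_bigr => x _; ring.
move=> j _; rewrite !mxE /PZD1.
have := PD1_pos j; rewrite lt0r => /andP[nz _].
have Sp : 0 < \sum_(m < J) pi_ p m * PD1_Z p m.
  have pp m : 0 < pi_ p m * PD1_Z p m.
    apply: mulr_gt0 (PD1_pos m).
    by case: vp => [[_ pib] _ _ _ _]; case/andP: (pib m) => h _; exact: lt_le_trans h.
  rewrite (bigD1 (Ordinal J0)) //=; apply: ltr_pwDl (pp _) _.
  by apply: sumr_ge0 => m _; apply: ltW.
by field; rewrite nz gt_eqF.
Qed.
End Final.

Theorem corollary2 (R : realType) (K J T0 T k : nat) (eps : R)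
    (psis psi : param R K J) :
  (2 <= K)%N -> (1 <= J)%N -> (1 <= T0)%N -> (T0 < T)%N -> 0 < eps ->
  valid_param T0 T eps psis ->
  (forall i j : 'I_J, (i < j)%N -> pi_ psis i < pi_ psis j) ->
  (1 <= k)%N -> (k.+1 <= T0)%N -> (2 * k.+1 <= T)%N ->
  ID_cond T k psis ->
  valid_param T0 T eps psi ->
  (forall (x : {ffun 'I_T -> 'I_K}) (d : bool), pW T0 psi x d = pW T0 psis x d) ->
  forall t : nat, (T0 < t <= T)%N -> ATT T0 T psi t = ATT T0 T psis t.
Proof.
move=> K2 J1 T01 T0T eps0 vs _ k1 kT0 kT ID vp hpW t _.
have kT' : (k.+3 <= T)%N by lia.
have K0 : (0 < K)%N by lia.
have Weq : forall x : {ffun 'I_T -> 'I_K}, Wp psi x = Wp psis x.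
  move=> x; case: (join_surj K0 k1 kT' x) => x1 [x2 [x3 [x4 ->]]].
  exact: (W_eq k1 kT' kT0 eps0 vs vp hpW J1 ID).
rewrite (ATT_formula eps0 T0T vp J1) (ATT_formula eps0 T0T vs J1).
apply/rowP => k0; rewrite !mxE; congr (_ / _).
  by apply: eq_bigr => x _; rewrite hpW Weq.
by apply: eq_bigr => x _; exact: hpW.
Qed.
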